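(* Let $n\ge1$, let $\mathbf{k}=(k_1,\dots,k_n)$ be positive integers and $N=n+|\mathbf{k}|$. The Filling Algorithm, $D\mapsto T(D)$, defines a bijection from $\mathcal{D}_{\mathbf{k}}$ onto $\mathcal{T}_{\mathbf{k}}$.
   Context: $|\mathbf{k}|=k_1+\cdots+k_n$. $\mathcal{D}_{\mathbf{k}}$ is the set of sequences $D=(a_1,\dots,a_N)$ whose positive entries are $k_1,\dots,k_n$ in this order, whose other $|\mathbf{k}|$ entries equal $-1$, and all of whose partial sums $a_1+\cdots+a_{i-1}$ are $\ge0$. Its SW-word $\texttt{SW}(D)=\sigma_1\cdots\sigma_N$ has $\sigma_i=S^{k_j}$ if $a_i=k_j$ and $\sigma_i=W$ if $a_i=-1$. $\mathcal{T}_{\mathbf{k}}$ is the set of arrays with $n$ columns, column $i$ consisting of $k_i+1$ cells in rows $1,\dots,k_i+1$, filled with the numbers $1,\dots,N$ each exactly once, such that entries increase from top to bottom in each column, increase from left to right along each row (among the cells present), and such that for every pair of entries $a<d$ with $d$ directly below $a$, no two entries $b,c$ with $a<b<c<d$ lie in the same column. Filling Algorithm (input $\texttt{SW}(D)$, output $T(D)$): place $1$ at the top of column $1$. Having placed $1,\dots,i-1$, call the bottom-most currently filled entry of column $j$ active if it is not in row $k_j+1$. If the $i$-th letter of $\texttt{SW}(D)$ is $W$, place $i$ immediately below the smallest active entry; otherwise place $i$ at the top of the first (leftmost) empty column. Continue until $1,\dots,N$ are placed. *)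

(* Defs.v *)
From mathcomp Require Import all_boot all_order all_algebra.
Set Implicit Arguments. Unset Strict Implicit. Unset Printing Implicit Defensive.
Import Order.TTheory GRing.Theory Num.Theory.

Definition bigN (k : seq nat) : nat := size k + sumn k.

Definition is_dyck (k : seq nat) (D : seq int) : Prop :=
  [/\ size D = bigN k,
      [seq x <- D | (0 < x)%R] = map Posz k,
      all (fun x : int => (0 < x)%R || (x == (-1)%R)) D
    & forall i, i < bigN k -> (0 <= \sum_(x <- take i D) x)%R ].

Inductive letter := LS of nat (* S^m *) | LW .

Definition SW (D : seq int) : seq letter :=
  map (fun a : int => if (0 < a)%R then LS `|a|%N else LW) D.

(* A partial filling: seq of n columns, each listed top to bottom. *)
Definition col (T : seq (seq nat)) (j : nat) : seq nat := nth [::] T j.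
Definition bottom (c : seq nat) : nat := last 0 c.

Definition active (k : seq nat) (T : seq (seq nat)) (j : nat) : bool :=
  (0 < size (col T j)) && (size (col T j) < (nth 0 k j).+1).

Definition step (k : seq nat) (i : nat) (l : letter) (T : seq (seq nat))
  : seq (seq nat) :=
  match l with
  | LW =>
      let js := [seq j <- iota 0 (size k) | active k T j] in
      match js with
      | [::] => T (* never happens on valid input *)
      | j0 :: _ =>
          let j := foldl (fun b j => if bottom (col T j) < bottom (col T b)
                                     then j else b) j0 js in
          set_nth [::] T j (rcons (col T j) i)
      end
  | LS _ =>
      let j := find (fun c : seq nat => c == [::]) T in
      if j < size T then set_nth [::] T j [:: i] else T
  end.

Fixpoint fill_from (k : seq nat) (i : nat) (w : seq letter) (T : seq (seq nat))
  : seq (seq nat) :=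
  match w with
  | [::] => T
  | l :: w' => fill_from k i.+1 w' (step k i l T)
  end.

(* Place 1 at the top of column 1, then letters 2..N of SW(D). *)
Definition fill_init (k : seq nat) : seq (seq nat) :=
  set_nth [::] (nseq (size k) [::]) 0 [:: 1].

Definition fillT (k : seq nat) (D : seq int) : seq (seq nat) :=
  fill_from k 2 (behead (SW D)) (fill_init k).

Definition is_tab (k : seq nat) (T : seq (seq nat)) : Prop :=
  [/\ size T = size k,
      forall j, j < size k -> size (col T j) = (nth 0 k j).+1,
      perm_eq (flatten T) (iota 1 (bigN k))
    & [/\
      forall j, j < size k -> sorted ltn (col T j),
      forall i j r, i < j -> j < size k -> r < size (col T i) ->
        r < size (col T j) -> nth 0 (col T i) r < nth 0 (col T j) r
    & (* a = entry, d directly below a: no b, c in a common column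
         with a < b < c < d *)
      forall j r, j < size k -> r.+1 < size (col T j) ->
        forall j' r1 r2, j' < size k -> r1 < size (col T j') ->
          r2 < size (col T j') ->
          ~ [/\ nth 0 (col T j) r < nth 0 (col T j') r1,
                nth 0 (col T j') r1 < nth 0 (col T j') r2
              & nth 0 (col T j') r2 < nth 0 (col T j) r.+1] ] ].

(* Main.v *)
Require Import Defs.
From mathcomp Require Import all_boot all_order all_algebra.
From mathcomp Require Import zify.
Set Implicit Arguments. Unset Strict Implicit. Unset Printing Implicit Defensive.
Require Import Defs.
Import Order.TTheory GRing.Theory Num.Theory.

Lemma sorted_rcons_lt (s : seq nat) x :
  sorted ltn s -> (forall y, y \in s -> y < x) -> sorted ltn (rcons s x).
Proof.
case: s => [|a s] //= Hs Hy.
rewrite rcons_path Hs /=; apply: Hy; exact: mem_last.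
Qed.

Lemma sorted_le_last (s : seq nat) y : sorted ltn s -> y \in s -> y <= last 0 s.
Proof.
move=> Hs /(nthP 0) [i Hi <-].
have Hl : sorted leq s by apply: sub_sorted Hs => a b /ltnW.
have Hne : 0 < size s by case: (s) Hi.
rewrite -nth_last; apply: (sorted_leq_nth leq_trans leqnn 0 Hl) => //=.
  by rewrite inE prednK.
by rewrite -ltnS prednK.
Qed.

Lemma sorted_head_le (s : seq nat) y : sorted ltn s -> y \in s -> head 0 s <= y.
Proof.
move=> Hs /(nthP 0) [i Hi <-].
have Hl : sorted leq s by apply: sub_sorted Hs => a b /ltnW.
have Hne : 0 < size s by case: (s) Hi.
rewrite -nth0; apply: (sorted_leq_nth leq_trans leqnn 0 Hl) => //=.
Qed.

Lemma count_flatten_set_nth (a : pred nat) (S : seq (seq nat)) p c :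
  p < size S ->
  count a (flatten (set_nth [::] S p c)) + count a (nth [::] S p) =
  count a (flatten S) + count a c.
Proof.
elim: S p => [|s S IH] [|p] //= Hp.
  by rewrite !count_cat; lia.
rewrite !count_cat -addnA IH //; lia.
Qed.

Lemma mem_flatten_nth (S : seq (seq nat)) j x : x \in nth [::] S j -> x \in flatten S.
Proof.
case: (ltnP j (size S)) => Hj; last by rewrite nth_default.
move=> Hx; apply/flattenP; exists (nth [::] S j) => //; exact: mem_nth.
Qed.

Lemma count_flatten_ge1 (S : seq (seq nat)) j x :
  x \in nth [::] S j -> 0 < count_mem x (flatten S).
Proof. by move=> /mem_flatten_nth; rewrite -has_count has_pred1. Qed.

Lemma count_flatten_ge2 (S : seq (seq nat)) j j' x :
  j != j' -> x \in nth [::] S j -> x \in nth [::] S j' -> 1 < count_mem x (flatten S).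
Proof.
move=> Hne Hj Hj'.
have Hs : j < size S by case: ltnP Hj => // H; rewrite nth_default.
have := count_flatten_set_nth (pred1 x) [::] Hs.
have : x \in nth [::] (set_nth [::] S j [::]) j' by rewrite nth_set_nth /= eq_sym (negbTE Hne).
move=> /count_flatten_ge1.
have : 0 < count_mem x (nth [::] S j) by rewrite -has_count has_pred1.
simpl; lia.
Qed.

Definition upd (S : seq (seq nat)) p v := set_nth [::] S p (rcons (col S p) v).

Lemma col_upd S p v j : col (upd S p v) j = if j == p then rcons (col S p) v else col S j.
Proof. by rewrite /col /upd nth_set_nth /=. Qed.

Lemma size_upd S p v : p < size S -> size (upd S p v) = size S.
Proof. by move=> Hp; rewrite /upd size_set_nth; apply/maxn_idPr. Qed.

Lemma mem_col_upd S p v j x :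
  (x \in col (upd S p v) j) = (x \in col S j) || ((j == p) && (x == v)).
Proof.
rewrite col_upd; case: eqP => [->|] /=; last by rewrite orbF.
by rewrite mem_rcons inE orbC.
Qed.

Lemma count_upd S p v x : p < size S ->
  count_mem x (flatten (upd S p v)) = count_mem x (flatten S) + (v == x).
Proof.
move=> Hp; have := count_flatten_set_nth (pred1 x) (rcons (col S p) v) Hp.
rewrite /upd /col -cats1 count_cat /= addn0 (eq_sym v x).
set a := count _ (flatten _); set b := count _ (nth _ _ _); set c := count _ (flatten S).
move=> H; apply/eqP; rewrite -(eqn_add2r b) H; apply/eqP; lia.
Qed.

Lemma fill_fromP k (P : nat -> seq (seq nat) -> Prop) w m T :
  P m T ->
  (forall t S, t < size w -> P (m + t) S -> P (m + t).+1 (step k (m + t).+1 (nth LW w t) S)) ->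
  P (m + size w) (fill_from k m.+1 w T).
Proof.
elim: w m T => [|l w IH] m T HP Hs /=; first by rewrite addn0.
rewrite -addSnnS; apply: IH.
  by have := Hs 0 T; rewrite addn0; apply.
move=> t S Ht HPS; have := Hs t.+1 S; rewrite -addSnnS; apply => //.
Qed.
Section K.
Variable k : seq nat.
Hypothesis kpos : all (fun x => 0 < x) k.
Local Notation n := (size k).
Local Notation N := (bigN k).

Definition slot j (c : seq nat) := if c == [::] then 0 else (nth 0 k j).+1 - size c.
Definition slots S := \sum_(j < n) slot j (col S j).

Lemma slots_upd_gen S p v : p < n ->
  slots (upd S p v) + slot p (col S p) = slots S + slot p (rcons (col S p) v).
Proof.
move=> Hp; rewrite /slots (bigD1 (Ordinal Hp)) //= [in RHS](bigD1 (Ordinal Hp)) //=.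
rewrite col_upd eqxx.
rewrite (eq_bigr (fun j : 'I_n => slot j (col S j))); first lia.
move=> j Hj; rewrite col_upd; case: eqP => // Ej; move: Hj.
have -> : j = Ordinal Hp by apply: val_inj; exact: Ej.
by rewrite eqxx.
Qed.

Lemma slots_upd_nil S p v : p < n -> col S p = [::] ->
  slots (upd S p v) = slots S + nth 0 k p.
Proof.
move=> Hp Hn; have := slots_upd_gen S v Hp.
by rewrite Hn /slot /= subSS subn0 addn0.
Qed.

Lemma slots_upd_cons S p v : p < n -> col S p != [::] ->
  size (col S p) < (nth 0 k p).+1 -> slots (upd S p v) + 1 = slots S.
Proof.
move=> Hp Hn Hs; have := slots_upd_gen S v Hp.
rewrite /slot (negbTE Hn) size_rcons.
have -> : (rcons (col S p) v == [::]) = false by case: (col S p).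
move: Hs; set s := size _; move=> Hs; lia.
Qed.

Lemma slots_pos_active S : 0 < slots S -> exists2 j, j < n & active k S j.
Proof.
move=> Hpos.
case: (boolP [exists j : 'I_n, 0 < slot j (col S j)]).
  move=> /existsP [j]; rewrite /slot; case: eqP => // Hne Hlt.
  exists j => //; rewrite /active.
  apply/andP; split; first by case: (col S j) Hne.
  by move: Hlt; rewrite subn_gt0.
move=> /existsPn Hall; move: Hpos; rewrite /slots big1 // => j _.
by move: (Hall j); case: (slot _ _).
Qed.

Lemma foldl_argmin (f : nat -> nat) (js : seq nat) j0 :
  let r := foldl (fun b j => if f j < f b then j else b) j0 js in
  r \in j0 :: js /\ forall j, j \in j0 :: js -> f r <= f j.
Proof.
elim: js j0 => [|x js IH] j0 /=.
  by split=> [|j]; rewrite ?inE // => /eqP ->.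
set j1 := if f x < f j0 then x else j0.
have [H1 H2] := IH j1.
have Hj1 : j1 = x \/ j1 = j0 by rewrite /j1; case: ifP; auto.
have Hm0 : f j1 <= f j0 by rewrite /j1; case: ifP => // /ltnW.
have Hmx : f j1 <= f x by rewrite /j1; case: ifP => //; rewrite ltnNge => /negbFE.
split.
  move: H1; rewrite !inE; case: Hj1 => ->; [case/orP=> -> | case/orP=> ->]; rewrite ?orbT //.
move=> j; rewrite !inE => /orP [/eqP ->|/orP [/eqP ->|Hj]].
- apply: leq_trans Hm0; apply: H2; exact: mem_head.
- apply: leq_trans Hmx; apply: H2; exact: mem_head.
- by apply: H2; rewrite inE Hj orbT.
Qed.

Lemma step_S S i a c : size S = n -> c < n -> col S c = [::] ->
  (forall j, j < c -> col S j != [::]) -> step k i (LS a) S = upd S c i.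
Proof.
move=> Hs Hc Hnil Hne /=.
have Hhas : has (fun c0 : seq nat => c0 == [::]) S.
  by apply/(has_nthP [::]); exists c; rewrite ?Hs //; apply/eqP.
set f := find _ S.
have Hf : f = c.
  apply/eqP; rewrite eqn_leq; apply/andP; split.
  - rewrite leqNgt; apply/negP => Hcf; have := before_find [::] Hcf.
    by rewrite -/(col S c) Hnil eqxx.
  - rewrite leqNgt; apply/negP => Hfc; have := nth_find [::] Hhas.
    by rewrite -/f -/(col S f) (negbTE (Hne f Hfc)).
by rewrite Hf Hs Hc /upd Hnil.
Qed.

Lemma step_W S i : (exists2 j, j < n & active k S j) ->
  exists p, [/\ p < n, active k S p,
     (forall j, j < n -> active k S j -> bottom (col S p) <= bottom (col S j))
   & step k i LW S = upd S p i].
Proof.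
move=> [j Hj Ha].
case E: [seq j <- iota 0 n | active k S j] => [|j0 js].
  have : j \in [seq j <- iota 0 n | active k S j] by rewrite mem_filter Ha mem_iota.
  by rewrite E.
have [H1 H2] := foldl_argmin (fun j => bottom (col S j)) (j0 :: js) j0.
have Hm : forall x, (x \in j0 :: j0 :: js) = (x \in j0 :: js).
  by move=> x; rewrite !inE orbA orbb.
set p := foldl _ j0 (j0 :: js) in H1 H2 *.
move: H1; rewrite Hm -E mem_filter mem_iota /= => /andP [Hap Hpn].
exists p; split => //; last by rewrite /step; cbv zeta; rewrite E.
move=> j' Hj' Ha'; apply: H2; rewrite Hm -E mem_filter Ha' mem_iota /=; exact: Hj'.
Qed.


Hypothesis kn : 0 < n.

Lemma N_ge2 : 1 < N.
Proof.
rewrite /bigN; move: kn kpos; case: k => //= a k' _ /andP [Ha _]; lia.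
Qed.

Lemma sum_split (s : seq int) :
  all (fun x : int => (0 < x)%R || (x == -1)%R) s ->
  (\sum_(x <- s) x)%R =
  (Posz (sumn [seq `|x|%N | x <- [seq y <- s | (0 < y)%R]])
     - Posz (count (fun x : int => ~~ (0 < x)%R) s))%R.
Proof.
elim: s => [|x s IH] /=; first by rewrite big_nil.
move=> /andP [Hx Hs]; rewrite big_cons IH //.
case: (boolP (0 < x)%R) => Hp /=.
  rewrite -{1}(gez0_abs (ltW Hp)); lia.
move: Hx; rewrite (negbTE Hp) /= => /eqP ->; lia.
Qed.

Section Dyck.
Variable D : seq int.
Hypothesis HD : is_dyck k D.

Local Notation Dn t := (nth (0:int) D t).

Definition cnt m := count (fun x : int => (0 < x)%R) (take m D).

Lemma dsize : size D = N. Proof. by case: HD. Qed.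

Lemma dfilt : [seq x <- D | (0 < x)%R] = map Posz k. Proof. by case: HD. Qed.

Lemma dval t : t < N -> (0 < Dn t)%R || (Dn t == -1)%R.
Proof.
case: HD => Hs _ Hall _ Ht; move/(all_nthP (0 : int)): Hall => /(_ t); rewrite Hs; apply => //.
Qed.

Lemma dneg t : t < N -> ~~ (0 < Dn t)%R -> Dn t = (-1)%R.
Proof. by move=> /dval /orP [->|/eqP]. Qed.

Lemma dpos t : t < N -> (0 < Dn t)%R ->
  cnt t < n /\ Dn t = Posz (nth 0 k (cnt t)).
Proof.
move=> Ht Hpos.
have Hf := dfilt.
have HDs : D = take t D ++ Dn t :: drop t.+1 D.
  by rewrite -drop_nth ?cat_take_drop // dsize.
rewrite HDs filter_cat /= Hpos in Hf.
have Hsz := congr1 size Hf.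
rewrite size_cat /= size_map size_filter in Hsz.
have Hc : cnt t < n by rewrite /cnt -Hsz; lia.
split => //.
have := congr1 (fun s => nth 0%R s (cnt t)) Hf => /=.
rewrite nth_cat size_filter ltnn subnn /= => ->.
by rewrite (nth_map 0).
Qed.

Lemma cnt_succ t : t < N -> cnt t.+1 = cnt t + (0 < Dn t)%R.
Proof.
move=> Ht; rewrite /cnt (take_nth (0:int)) ?dsize // -cats1 count_cat /=; lia.
Qed.

Lemma sum_succ t : t < N ->
  (\sum_(x <- take t.+1 D) x = \sum_(x <- take t D) x + Dn t)%R.
Proof.
by move=> Ht; rewrite (take_nth (0:int)) ?dsize // -cats1 big_cat big_seq1.
Qed.

Lemma count_posD : count (fun x : int => (0 < x)%R) D = n.
Proof. by rewrite -size_filter dfilt size_map. Qed.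

Lemma cnt_le t : cnt t <= n.
Proof.
by rewrite -count_posD /cnt -[X in _ <= count _ X](cat_take_drop t) count_cat leq_addr.
Qed.

Lemma sum_all : (\sum_(x <- D) x = 0)%R.
Proof.
case: HD => Hs Hf Hall _.
rewrite sum_split // Hf -map_comp.
have -> : [seq (absz \o Posz) i | i <- k] = k by rewrite map_id_in.
have := count_predC (fun x : int => (0 < x)%R) D.
rewrite count_posD Hs /bigN => /addnI H.
by rewrite -[count _ D]/(count (predC (fun x : int => (0 < x)%R)) D) H subrr.
Qed.

Lemma sum_ge0 i : i <= N -> (0 <= \sum_(x <- take i D) x)%R.
Proof.
rewrite leq_eqVlt => /orP [/eqP ->|Hi].
  by rewrite -dsize take_size sum_all.
by case: HD => _ _ _; apply.
Qed.

Lemma first_pos : (0 < Dn 0)%R.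
Proof.
have H2 := N_ge2.
have := sum_ge0 (ltnW H2).
rewrite (take_nth (0:int)) ?dsize 1?ltnW // take0 /= big_cons big_nil addr0.
have := dval (ltnW H2); case/orP => // /eqP ->; done.
Qed.


Record Inv (m : nat) (S : seq (seq nat)) : Prop := {
  i_size : size S = n;
  i_sorted : forall j, sorted ltn (col S j);
  i_len : forall j, j < n -> size (col S j) <= (nth 0 k j).+1;
  i_cnt : forall x, count_mem x (flatten S) = (0 < x <= m);
  i_start : forall j, j < n -> (col S j != [::]) = (j < cnt m);
  i_row : forall i j r, i < j -> j < n -> r < size (col S i) -> r < size (col S j) ->
            nth 0 (col S i) r < nth 0 (col S j) r;
  i_pat : forall j r, r.+1 < size (col S j) -> forall j' b c, b \in col S j' -> c \in col S j' ->
            nth 0 (col S j) r < b -> b < c -> c < nth 0 (col S j) r.+1 -> False;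
  i_act : forall j, j < n -> active k S j -> forall j' b c, b \in col S j' -> c \in col S j' ->
            bottom (col S j) < b -> b < c -> False;
  i_slots : Posz (slots S) = (\sum_(x <- take m D) x)%R;
  i_top : forall x, 0 < x <= m ->
            [exists j : 'I_n, head 0 (col S j) == x] = (0 < Dn x.-1)%R
}.

Lemma inv_mem m S j x : Inv m S -> x \in col S j -> 0 < x <= m.
Proof.
move=> HI Hx; have := count_flatten_ge1 Hx; rewrite (i_cnt HI).
by case: (0 < x <= m).
Qed.

Lemma nth_lt_sorted (s : seq nat) i j : sorted ltn s -> i < j -> j < size s ->
  nth 0 s i < nth 0 s j.
Proof.
move=> Hs Hij Hj; apply: (sorted_ltn_nth ltn_trans 0 Hs) => //.
by rewrite inE (ltn_trans Hij).
Qed.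

Lemma bottom_nth (s : seq nat) : bottom s = nth 0 s (size s).-1.
Proof. by rewrite /bottom nth_last. Qed.

Lemma head_rcons_ne (s : seq nat) v : s != [::] -> head 0 (rcons s v) = head 0 s.
Proof. by case: s. Qed.

Lemma inv_upd t S p : t < N -> Inv t S -> p < n ->
  (col S p = [::] /\ p = cnt t /\ (0 < Dn t)%R) \/
  (active k S p /\
   (forall j, j < n -> active k S j -> bottom (col S p) <= bottom (col S j)) /\
   ~~ (0 < Dn t)%R) ->
  Inv t.+1 (upd S p t.+1).
Proof.
move=> Ht HI Hp Hcase.
set v := t.+1.
have Hb : forall j x, x \in col S j -> 0 < x <= t by move=> j x; exact: inv_mem.
have Hold : forall j' x, x \in col (upd S p v) j' -> x < v -> x \in col S j'.
  move=> j' x; rewrite mem_col_upd => /orP [//|/andP [_ /eqP ->]]; by rewrite ltnn.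
have Hb' : forall j x, x \in col (upd S p v) j -> x <= v.
  move=> j x; rewrite mem_col_upd => /orP [/Hb /andP [_ H]|/andP [_ /eqP ->]] //.
  exact: ltnW.
have Hhd : forall j, head 0 (col S j) != v.
  move=> j; case E: (col S j) => [|a c] //=.
  have : a \in col S j by rewrite E mem_head.
  by move/Hb => /andP [_ H]; apply/eqP => Ha; move: H; rewrite Ha ltnn.
have Hsz : size S = n := i_size HI.
have Hlenp : size (col S p) < (nth 0 k p).+1.
  by case: Hcase => [[-> _]|[/andP [_ H] _]].
constructor.
- by rewrite size_upd ?Hsz.
- move=> j; rewrite col_upd; case: eqP => _; last exact: (i_sorted HI).
  apply: sorted_rcons_lt; first exact: (i_sorted HI).
  by move=> y /Hb /andP [_ H].
- move=> j Hj; rewrite col_upd; case: eqP => [->|_]; last exact: (i_len HI).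
  by rewrite size_rcons.
- move=> x; rewrite count_upd ?Hsz // (i_cnt HI).
  case: (eqVneq x v) => [->|Hne]; first by rewrite /v ltnn andbF leqnn.
  by rewrite /v addn0 [x <= t.+1]leq_eqVlt (negbTE Hne) /= ltnS.
- move=> j Hj; rewrite cnt_succ // col_upd.
  case: Hcase => [[Hnil [Ep Hpos]]|[Hact [_ Hneg]]].
    rewrite Hpos addn1 ltnS leq_eqVlt -Ep; case: (eqVneq j p) => [->|Hne] /=.
      by case: (col S _).
    by rewrite (i_start HI Hj) Ep.
  rewrite (negbTE Hneg) addn0; case: (eqVneq j p) => [->|_]; last exact: (i_start HI).
  rewrite -(i_start HI Hp); move: Hact; rewrite /active.
  by case: (col S p).
- move=> i j r Hij Hj; rewrite !col_upd.
  case: (eqVneq i p) => [Eip|Hip]; case: (eqVneq j p) => [Ejp|Hjp].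
  + by move: Hij; rewrite Eip Ejp ltnn.
  + rewrite size_rcons nth_rcons -Eip => Hr Hrj.
    case: (ltnP r (size (col S i))) => Hr'; first by apply: (i_row HI).
    have Er : r = size (col S i) by lia.
    rewrite Er eqxx; exfalso.
    case: Hcase => [[Hnil [Ep _]]|[Hact [Hmin _]]].
      have Hs0 : col S j = [::].
        apply/eqP; apply: negbFE; rewrite (i_start HI Hj) -Ep -Eip ltnNge.
        by rewrite (ltnW Hij).
      by move: Hrj; rewrite Hs0.
    have Hpos : 0 < size (col S i) by move: Hact; rewrite Eip => /andP [].
    have Hi1 : (size (col S i)).-1 < size (col S i) by rewrite prednK.
    have Hj1 : (size (col S i)).-1 < size (col S j) by apply: ltn_trans Hi1 _; rewrite -Er.
    have H1 := i_row HI Hij Hj Hi1 Hj1.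
    have H2 : nth 0 (col S j) (size (col S i)).-1 < nth 0 (col S j) r.
      by apply: nth_lt_sorted (i_sorted HI _) _ Hrj; rewrite Er prednK.
    apply: (i_act HI Hp _ (mem_nth 0 Hj1) (mem_nth 0 Hrj) _ H2).
      exact: Hact.
    by rewrite -Eip bottom_nth.
  + rewrite size_rcons nth_rcons -Ejp => Hri Hr.
    case: (ltnP r (size (col S j))) => Hr'; first by apply: (i_row HI).
    have Er : r = size (col S j) by lia.
    rewrite Er eqxx.
    move: (mem_nth 0 Hri) => /Hb /andP [_ H].
    by rewrite /v ltnS -Er.
  + by apply: (i_row HI).
- move=> j r Hr j' b c Hbm Hcm Hab Hbc Hcd.
  have Hcv : c < v.
    apply: leq_trans Hcd _; apply: (Hb' j); apply: mem_nth; exact: Hr.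
  have Hbo := Hold j' b Hbm (ltn_trans Hbc Hcv).
  have Hco := Hold j' c Hcm Hcv.
  move: Hr Hab Hcd; rewrite col_upd.
  case: (eqVneq j p) => [Ejp|Hjp] Hr Hab Hcd; last exact: (i_pat HI Hr Hbo Hco Hab Hbc Hcd).
  move: Hr Hab Hcd; rewrite size_rcons ltnS !nth_rcons leq_eqVlt.
  case: (ltnP r.+1 (size (col S p))) => Hr1.
    rewrite !orbT /= => _ Hab Hcd.
    by apply: (i_pat HI Hr1 Hbo Hco Hab Hbc Hcd).
  rewrite !orbF => /eqP Er1; rewrite -Er1 eqxx /= => Hab _.
  case: Hcase => [[Hnil _]|[Hact _]].
    by move: Er1; rewrite Hnil.
  apply: (i_act HI Hp Hact Hbo Hco _ Hbc).
  by rewrite bottom_nth -Er1.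
- move=> j Hj Hact j' b c Hbm Hcm Hab Hbc.
  rewrite /active col_upd in Hact; rewrite col_upd in Hab.
  case: (eqVneq j p) Hact Hab => [Ejp|Hjp] Hact Hab.
    rewrite /bottom last_rcons in Hab.
    have := Hb' _ _ Hbm; rewrite leqNgt Hab //.
  have Hact0 : active k S j by [].
  have Hcv : c <= v := Hb' _ _ Hcm.
  have Hbo := Hold j' b Hbm (leq_trans Hbc Hcv).
  move: Hcm; rewrite mem_col_upd => /orP [Hco|/andP [/eqP Ejp' /eqP Ecv]].
    exact: (i_act HI Hj Hact0 Hbo Hco Hab Hbc).
  case: Hcase => [[Hnil _]|[Hactp [Hmin _]]].
    by move: Hbo; rewrite Ejp' Hnil.
  have H1 : b <= bottom (col S p).
    by apply: sorted_le_last; [exact: (i_sorted HI)|rewrite -Ejp'].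
  have H2 := Hmin j Hj Hact0.
  lia.
- rewrite sum_succ //.
  case: Hcase => [[Hnil [Ep Hpos]]|[Hact [_ Hneg]]].
    rewrite slots_upd_nil // PoszD (i_slots HI).
    have [_ ->] := dpos Ht Hpos.
    by rewrite -Ep.
  have Hne : col S p != [::] by move: Hact; rewrite /active; case: (col S p).
  have Hs := slots_upd_cons v Hp Hne Hlenp.
  rewrite (dneg Ht Hneg) -(i_slots HI) -Hs.
  lia.
- move=> x /andP [Hx0 Hxv].
  case: (eqVneq x v) => [Exv|Hxv'].
    rewrite Exv /=.
    case: Hcase => [[Hnil [Ep Hpos]]|[Hact [_ Hneg]]].
      rewrite Hpos; apply/existsP; exists (Ordinal Hp).
      by rewrite col_upd /= eqxx Hnil.
    rewrite (negbTE Hneg); apply/negbTE; apply/existsPn => j.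
    rewrite col_upd; case: (eqVneq (nat_of_ord j) p) => [_|_].
      rewrite head_rcons_ne; first by rewrite (Hhd p).
      by move: Hact; rewrite /active; case: (col S p).
    by rewrite (Hhd _).
  have Hxt : x <= t by move: Hxv; rewrite /v leq_eqVlt (negbTE Hxv') /= ltnS.
  rewrite -(i_top HI); last by rewrite Hx0 Hxt.
  apply: eq_existsb => j.
  rewrite col_upd; case: (eqVneq (nat_of_ord j) p) => [Ej|_] //; rewrite Ej.
  case: Hcase => [[Hnil _]|[Hact _]].
    rewrite Hnil /=; apply/idP/idP => /eqP E; move: Hxv' Hx0; rewrite -E //.
    by rewrite eqxx.
  rewrite head_rcons_ne //.
  by move: Hact; rewrite /active; case: (col S p).
Qed.

Lemma inv_step t S : t < N -> Inv t S -> Inv t.+1 (step k t.+1 (nth LW (SW D) t) S).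
Proof.
move=> Ht HI.
rewrite /SW (nth_map (0:int)) ?dsize //.
case: (boolP (0 < Dn t)%R) => Hpos.
  have [Hc _] := dpos Ht Hpos.
  have Hnil : col S (cnt t) = [::].
    by apply/eqP; apply: negbFE; rewrite (i_start HI Hc) ltnn.
  rewrite (step_S _ _ (i_size HI) Hc Hnil).
    by apply: inv_upd => //; left.
  by move=> j Hj; rewrite (i_start HI (ltn_trans Hj Hc)) Hj.
have Hsl : 0 < slots S.
  have := sum_ge0 Ht; rewrite sum_succ // -(i_slots HI) (dneg Ht Hpos); lia.
have [p [Hp Hact Hmin ->]] := step_W t.+1 (slots_pos_active Hsl).
by apply: inv_upd => //; right.
Qed.

Lemma colE j : col (nseq n [::]) j = [::].
Proof. by rewrite /col nth_nseq; case: ifP. Qed.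

Lemma flatten_nseq_nil m : flatten (nseq m ([::] : seq nat)) = [::].
Proof. by elim: m. Qed.

Lemma inv0 : Inv 0 (nseq n [::]).
Proof.
constructor => //.
- by rewrite size_nseq.
- by move=> j; rewrite colE.
- by move=> j _; rewrite colE.
- by move=> x; rewrite flatten_nseq_nil /=; case: x.
- by move=> j _; rewrite colE /cnt take0.
- by move=> i j r _ _; rewrite colE.
- by move=> j r; rewrite colE.
- by move=> j _; rewrite /active colE.
- rewrite /slots big1 ?take0 ?big_nil // => j _.
  by rewrite colE.
- by move=> x; case: x.
Qed.

Lemma fillT_eq : fillT k D = fill_from k 1 (SW D) (nseq n [::]).
Proof.
have Hf := first_pos.
rewrite /fillT /SW.
case ED : D Hf => [|d D'] /=; first by rewrite ltxx.
move=> Hd; rewrite Hd.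
congr fill_from.
rewrite (step_S _ _ (size_nseq _ _) kn) ?colE //.
by rewrite /upd colE.
Qed.

Lemma size_SW : size (SW D) = N.
Proof. by rewrite size_map dsize. Qed.

Lemma inv_fill : Inv N (fillT k D).
Proof.
rewrite fillT_eq.
have := @fill_fromP k Inv (SW D) 0 (nseq n [::]) inv0.
rewrite add0n size_SW; apply.
move=> t S; rewrite add0n; exact: inv_step.
Qed.

Lemma tab_of_inv S : Inv N S -> is_tab k S.
Proof.
move=> HI.
have Hs0 : slots S = 0.
  have := i_slots HI; rewrite -dsize take_size sum_all; lia.
have HcntN : cnt N = n by rewrite /cnt -dsize take_size count_posD.
split.
- exact: (i_size HI).
- move=> j Hj.
  have Hne : col S j != [::] by rewrite (i_start HI Hj) HcntN.
  have Hsl : slot j (col S j) = 0.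
    move: Hs0; rewrite /slots (bigD1 (Ordinal Hj)) //= => /eqP.
    by rewrite addn_eq0 => /andP [/eqP -> _].
  move: Hsl; rewrite /slot (negbTE Hne) => /eqP; rewrite subn_eq0 => H.
  by apply/eqP; rewrite eqn_leq H (i_len HI Hj).
- have Hc := i_cnt HI.
  have Hm x : (x \in flatten S) = (0 < x <= N).
    by rewrite -has_pred1 has_count Hc; case: (0 < x <= N).
  apply: uniq_perm.
  + by apply: count_mem_uniq => x; rewrite Hc Hm.
  + exact: iota_uniq.
  + by move=> x; rewrite mem_iota Hm add1n ltnS.
- split.
  + move=> j _; exact: (i_sorted HI).
  + move=> i j r Hij Hj Hri Hrj; exact: (i_row HI).
  + move=> j r Hj Hr j' r1 r2 Hj' Hr1 Hr2 [H1 H2 H3].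
    exact: (i_pat HI Hr (mem_nth 0 Hr1) (mem_nth 0 Hr2) H1 H2 H3).
Qed.

End Dyck.

Lemma filter_nil_all (p : pred nat) (s : seq nat) :
  (forall y, y \in s -> ~~ p y) -> [seq x <- s | p x] = [::].
Proof.
move=> H; apply/eqP; rewrite -size_eq0 size_filter -leqn0 leqNgt -has_count.
by apply/hasPn.
Qed.

Lemma sorted_cons_gt (x : nat) s y : sorted ltn (x :: s) -> y \in s -> x < y.
Proof.
move=> /= Hp Hy; have := order_path_min ltn_trans Hp.
by move/allP => /(_ y Hy).
Qed.

Lemma filter_rcons_le (s : seq nat) m : sorted ltn s -> m.+1 \in s ->
  [seq x <- s | x <= m.+1] = rcons [seq x <- s | x <= m] m.+1.
Proof.
elim: s => [|x s IH] //= Hs.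
have Hs' : sorted ltn s by apply: path_sorted Hs.
rewrite inE => /orP [/eqP Ex|Hin].
  rewrite -Ex leqnn ltnn /=.
  rewrite !filter_nil_all //.
    move=> y Hy; rewrite -ltnNge; apply: ltn_trans (sorted_cons_gt Hs Hy).
    by rewrite -Ex.
  by move=> y Hy; rewrite -ltnNge Ex; exact: (sorted_cons_gt Hs Hy).
have Hx : x < m.+1 by exact: sorted_cons_gt Hs Hin.
by rewrite (ltnW Hx) -ltnS Hx /= IH.
Qed.

Lemma filter_notin_le (s : seq nat) m : m.+1 \notin s ->
  [seq x <- s | x <= m.+1] = [seq x <- s | x <= m].
Proof.
move=> Hn; apply: eq_in_filter => x Hx.
rewrite leq_eqVlt ltnS; case: eqP => // Ex.
by move: Hn; rewrite -Ex Hx.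
Qed.

Lemma filter_take_le (s : seq nat) m : sorted ltn s ->
  [seq x <- s | x <= m] = take (count (fun x => x <= m) s) s.
Proof.
elim: s => [|x s IH] //= Hs.
have Hs' : sorted ltn s by apply: path_sorted Hs.
case: (leqP x m) => Hx /=.
  by rewrite IH // add1n.
rewrite filter_nil_all; last first.
  by move=> y Hy; rewrite -ltnNge (ltn_trans Hx (sorted_cons_gt Hs Hy)).
suff -> : count (fun x => x <= m) s = 0 by [].
apply/eqP; rewrite -leqn0 leqNgt -has_count; apply/hasPn => y Hy.
by rewrite -ltnNge (ltn_trans Hx (sorted_cons_gt Hs Hy)).
Qed.

Lemma last_mem0 (s : seq nat) : s != [::] -> last 0 s \in s.
Proof. by case: s => // y s' _; rewrite /= mem_last. Qed.

Lemma sorted_map_iota (g : nat -> nat) a l :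
  (forall i, a <= i -> i.+1 < a + l -> g i < g i.+1) ->
  sorted ltn (map g (iota a l)).
Proof.
elim: l a => [|l IH] a //= H.
case: l IH H => [|l] IH H //=.
apply/andP; split; first by apply: H => //; rewrite addnS ltnS -addn1 leq_add2l.
have := IH a.+1; rewrite /=; apply => i Hi Hil; apply: H; first exact: ltnW.
by move: Hil; rewrite !addnS addSn.
Qed.

Lemma dyck_det (k0 : seq nat) (D1 D2 : seq int) :
  [seq x <- D1 | (0 < x)%R] = map Posz k0 -> [seq x <- D2 | (0 < x)%R] = map Posz k0 ->
  all (fun x : int => (0 < x)%R || (x == -1)%R) D1 ->
  all (fun x : int => (0 < x)%R || (x == -1)%R) D2 ->
  map (fun x : int => (0 < x)%R) D1 = map (fun x : int => (0 < x)%R) D2 -> D1 = D2.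
Proof.
elim: D1 k0 D2 => [|x D1 IH] k0 [|y D2] // F1 F2 V1 V2 Em; try done.
move: V1 V2 Em => /= /andP [Vx V1] /andP [Vy V2] [Exy Em].
move: F1 F2; rewrite /= -Exy.
case: (boolP (0 < x)%R) => Hx.
  case: k0 => [|a k0] //= /eqP; rewrite eqseq_cons => /andP [/eqP Ex /eqP F1].
  move/eqP; rewrite eqseq_cons => /andP [/eqP Ey /eqP F2].
  by rewrite Ex Ey (IH k0 D2).
move: Vx Vy; rewrite -Exy (negbTE Hx) /= => /eqP -> /eqP -> F1 F2.
by rewrite (IH k0 D2).
Qed.

Lemma fill_inj D1 D2 : is_dyck k D1 -> is_dyck k D2 -> fillT k D1 = fillT k D2 -> D1 = D2.
Proof.
move=> H1 H2 E.
have I1 := inv_fill H1; have I2 := inv_fill H2.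
have S1 := dsize H1; have S2 := dsize H2.
case: (H1) => _ F1 V1 _; case: (H2) => _ F2 V2 _.
apply: (dyck_det F1 F2 V1 V2).
apply: (@eq_from_nth _ false); first by rewrite !size_map S1 S2.
move=> i; rewrite size_map S1 => Hi.
rewrite !(nth_map (0:int)) ?S1 ?S2 //.
have Hx : 0 < i.+1 <= N by [].
have e1 := i_top I1 Hx; have e2 := i_top I2 Hx.
rewrite E /= in e1; rewrite /= in e2.
by rewrite -e1 e2.
Qed.

Lemma kpos_nth j : j < n -> 0 < nth 0 k j.
Proof. by move=> Hj; move/(all_nthP 0): kpos; apply. Qed.

Section Surj.
Variable T : seq (seq nat).
Hypothesis HT : is_tab k T.

Lemma Tsz : size T = n. Proof. by case: HT. Qed.

Lemma Tlen j : j < n -> size (col T j) = (nth 0 k j).+1.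
Proof. by move=> Hj; case: HT => _ H _ _; apply: H. Qed.

Lemma Tcol_out j : n <= j -> col T j = [::].
Proof. by move=> Hj; rewrite /col nth_default // Tsz. Qed.

Lemma Tsorted j : sorted ltn (col T j).
Proof.
case: HT => _ _ _ [H _ _]; case: (ltnP j n) => Hj; first exact: H.
by rewrite Tcol_out.
Qed.

Lemma Trow i j r : i < j -> j < n -> r < size (col T i) -> r < size (col T j) ->
  nth 0 (col T i) r < nth 0 (col T j) r.
Proof. by case: HT => _ _ _ [_ H _]; apply: H. Qed.

Lemma Tcnt x : count_mem x (flatten T) = (0 < x <= N).
Proof.
case: HT => _ _ /permP H _.
by rewrite H count_uniq_mem ?iota_uniq // mem_iota add1n ltnS.
Qed.

Lemma Tmem j x : x \in col T j -> 0 < x <= N.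
Proof. by move/count_flatten_ge1; rewrite Tcnt; case: (0 < x <= N). Qed.

Lemma Tuniq j j' x : x \in col T j -> x \in col T j' -> j = j'.
Proof.
move=> Hj Hj'; apply/eqP; apply: contraT => Hne.
by have := count_flatten_ge2 Hne Hj Hj'; rewrite Tcnt; case: (0 < x <= N).
Qed.

Lemma Texists x : 0 < x <= N -> exists2 j, j < n & x \in col T j.
Proof.
move=> Hx; have : x \in flatten T by rewrite -has_pred1 has_count Tcnt Hx.
case/flattenP => s Hs Hxs; case/(nthP [::]): Hs => j Hj Ej.
by exists j; [rewrite -Tsz | rewrite /col Ej].
Qed.

Lemma Tpat j r : r.+1 < size (col T j) -> forall j' b c, b \in col T j' -> c \in col T j' ->
  nth 0 (col T j) r < b -> b < c -> c < nth 0 (col T j) r.+1 -> False.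
Proof.
move=> Hr j' b c Hb Hc H1 H2 H3.
have Hj : j < n by case: (ltnP j n) => // Hj; move: Hr; rewrite Tcol_out.
have Hj' : j' < n by case: (ltnP j' n) => // Hj'; move: Hb; rewrite Tcol_out.
case/(nthP 0): Hb => r1 Hr1 E1; case/(nthP 0): Hc => r2 Hr2 E2.
case: HT => _ _ _ [_ _ H]; apply: (H j r Hj Hr j' r1 r2 Hj' Hr1 Hr2).
by rewrite E1 E2.
Qed.

Lemma head_mem_T j : j < n -> head 0 (col T j) \in col T j.
Proof. by move/Tlen; case: (col T j) => //= a s _; rewrite mem_head. Qed.

Definition restr m := map (filter (fun x => x <= m)) T.

Lemma col_restr m j : col (restr m) j = [seq x <- col T j | x <= m].
Proof.
rewrite /col /restr; case: (ltnP j (size T)) => Hj; first by rewrite (nth_map [::]).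
by rewrite !nth_default ?size_map.
Qed.

Lemma size_restr m : size (restr m) = n.
Proof. by rewrite size_map Tsz. Qed.

Lemma restr_succ m j : j < n -> m.+1 \in col T j -> restr m.+1 = upd (restr m) j m.+1.
Proof.
move=> Hj Hm; apply: (@eq_from_nth _ [::]); first by rewrite size_upd ?size_restr.
move=> i _; change (col (restr m.+1) i = col (upd (restr m) j m.+1) i).
rewrite col_upd !col_restr; case: (eqVneq i j) => [->|Hij].
  exact: filter_rcons_le (Tsorted j) Hm.
apply: filter_notin_le; apply/negP => Hin; move: Hij.
by rewrite (Tuniq Hin Hm) eqxx.
Qed.

Definition topc x := find (fun c : seq nat => head 0 c == x) T.
Definition Dof := [seq (if topc x < size T then Posz (nth 0 k (topc x)) else (-1)%R)
                  | x <- iota 1 N].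

Lemma size_Dof : size Dof = N. Proof. by rewrite size_map size_iota. Qed.

Lemma topc_spec x j : j < n -> head 0 (col T j) = x -> topc x = j.
Proof.
move=> Hj Hh.
have Hhas : has (fun c : seq nat => head 0 c == x) T.
  by apply/(has_nthP [::]); exists j; rewrite ?Tsz // -/(col T j) Hh.
have Hf := nth_find [::] Hhas.
have Hlt : topc x < n by rewrite -Tsz -has_find.
apply: (@Tuniq _ _ x).
  by move: (head_mem_T Hlt); rewrite /col /topc (eqP Hf).
by rewrite -Hh; exact: head_mem_T.
Qed.

Lemma topc_none x : (forall j, j < n -> head 0 (col T j) != x) -> n <= topc x.
Proof.
move=> H; rewrite -Tsz leqNgt -has_find; apply/negP => /(has_nthP [::]) [j Hj Hh].
by move: (H j); rewrite -Tsz => /(_ Hj); rewrite -/(col T j) Hh.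
Qed.

Lemma Dof_nth m : m < N -> nth (0:int) Dof m =
  (if topc m.+1 < size T then Posz (nth 0 k (topc m.+1)) else (-1)%R).
Proof. by move=> Hm; rewrite /Dof (nth_map 0) ?size_iota // nth_iota // add1n. Qed.

Lemma Dof_top m j : m < N -> j < n -> head 0 (col T j) = m.+1 ->
  nth (0:int) Dof m = Posz (nth 0 k j).
Proof. by move=> Hm Hj Hh; rewrite Dof_nth // (topc_spec Hj Hh) Tsz Hj. Qed.

Lemma Dof_ntop m : m < N -> (forall j, j < n -> head 0 (col T j) != m.+1) ->
  nth (0:int) Dof m = (-1)%R.
Proof. by move=> Hm H; rewrite Dof_nth // Tsz ltnNge topc_none. Qed.

Lemma restr_case m : m < N -> exists2 j, j < n & m.+1 \in col T j /\
  ((head 0 (col T j) = m.+1 /\ col (restr m) j = [::] /\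
    (forall j', j' < j -> col (restr m) j' != [::]) /\
    nth (0:int) Dof m = Posz (nth 0 k j)) \/
   (active k (restr m) j /\ head 0 (col T j) != m.+1 /\ nth (0:int) Dof m = (-1)%R)).
Proof.
move=> Hm.
have [j Hj Hin] := @Texists m.+1 Hm.
exists j => //; split => //.
have Hs := Tsorted j.
case: (eqVneq (head 0 (col T j)) m.+1) => Hh.
  left; split => //; split.
    rewrite col_restr filter_nil_all // => y Hy; rewrite -ltnNge -Hh.
    exact: sorted_head_le.
  split; last exact: Dof_top.
  move=> j' Hj'; have Hj'n : j' < n := ltn_trans Hj' Hj.
  have Hr := Trow (r := 0) Hj' Hj.
  rewrite !nth0 Hh (Tlen Hj'n) (Tlen Hj) in Hr; have {}Hr := Hr isT isT.
  rewrite col_restr; apply/eqP => E.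
  have : head 0 (col T j') \in [seq x <- col T j' | x <= m].
    by rewrite mem_filter -ltnS Hr head_mem_T.
  by rewrite E.
right; split; last split => //.
  have Hhm : head 0 (col T j) <= m.
    by have := sorted_head_le Hs Hin; rewrite leq_eqVlt (negbTE Hh) ltnS.
  rewrite /active col_restr; apply/andP; split.
    rewrite lt0n size_eq0; apply/eqP => E.
    have : head 0 (col T j) \in [seq x <- col T j | x <= m].
      by rewrite mem_filter Hhm head_mem_T.
    by rewrite E.
  rewrite size_filter -(Tlen Hj).
  have := count_predC (fun x => x <= m) (col T j).
  have : 0 < count (predC (fun x => x <= m)) (col T j).
    by rewrite -has_count; apply/hasP; exists m.+1 => //=; rewrite ltnn.
  lia.
apply: Dof_ntop => // j' Hj'; apply/eqP => Hh'.
have : m.+1 \in col T j' by rewrite -Hh' head_mem_T.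
move/Tuniq/(_ Hin) => Ej; move: Hh; by rewrite -Ej Hh' eqxx.
Qed.



Lemma restr_step m : m < N ->
  step k m.+1 (nth LW (SW Dof) m) (restr m) = restr m.+1.
Proof.
move=> Hm; have [j Hj [Hin Hc]] := restr_case Hm.
rewrite /SW (nth_map (0:int)) ?size_Dof //.
case: Hc => [[Hh [Hnil [Hne HD]]]|[Hact [Hh HD]]]; rewrite HD.
  have -> : (0 < Posz (nth 0 k j))%R by rewrite ltz_nat; exact: kpos_nth.
  by rewrite (step_S _ _ (size_restr m) Hj Hnil Hne) (restr_succ Hj Hin).
have -> : (0 < (-1 : int))%R = false by [].
have [p [Hp Hactp Hmin ->]] := step_W m.+1 (ex_intro2 _ _ j Hj Hact).
suff Epj : p = j by rewrite Epj (restr_succ Hj Hin).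
apply/eqP; apply: contraT => Hpj.
set cp := col T p.
have Hsp := Tsorted p.
set s := count (fun x => x <= m) cp.
have HF : col (restr m) p = take s cp by rewrite col_restr filter_take_le.
have Hcp : size cp = (nth 0 k p).+1 := Tlen Hp.
move: Hactp; rewrite /active HF size_take.
case: (ltnP s (size cp)) => Hs; last by rewrite Hcp ltnn andbF.
move=> /andP [Hs0 _].
have Hall : all (fun x => x <= m) (take s cp).
  by rewrite -filter_take_le // filter_all.
have Hd : m < nth 0 cp s.
  have Hcnt : count (fun x => x <= m) (drop s cp) = 0.
    have := count_cat (fun x => x <= m) (take s cp) (drop s cp); rewrite cat_take_drop.
    move: Hall; rewrite all_count size_take Hs => /eqP ->.
    rewrite -/s; lia.
  have Hmem : nth 0 cp s \in drop s cp.
    have -> : nth 0 cp s = nth 0 (drop s cp) 0 by rewrite nth_drop addn0.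
    by apply: mem_nth; rewrite size_drop subn_gt0.
  rewrite ltnNge; apply/negP => Hle.
  have : 0 < count (fun x => x <= m) (drop s cp).
    by rewrite -has_count; apply/hasP; exists (nth 0 cp s).
  by rewrite Hcnt.
have Hdne : nth 0 cp s != m.+1.
  apply/eqP => E; have : m.+1 \in cp by rewrite -E mem_nth.
  by move/Tuniq/(_ Hin) => Epj; rewrite Epj eqxx in Hpj.
have Hbj := Hmin j Hj Hact.
set a := bottom (col (restr m) j) in Hbj.
have Hrj : col (restr m) j != [::] by move: Hact; rewrite /active; case: (col _ j).
have Hal : a = last 0 [seq x <- col T j | x <= m] by rewrite /a /bottom col_restr.
have := last_mem0 Hrj; rewrite col_restr mem_filter -Hal => /andP [Ham Ha].
have Hs1 : s.-1 < s by rewrite prednK.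
have Hb : bottom (col (restr m) p) = nth 0 cp s.-1.
  by rewrite HF /bottom -nth_last size_take Hs nth_take.
have Hbin : bottom (col (restr m) p) \in cp by rewrite Hb mem_nth // (ltn_trans Hs1 Hs).
have Hba : bottom (col (restr m) p) != a.
  apply/eqP => E; move: Hbin; rewrite E => /Tuniq/(_ Ha) Epj.
  by rewrite Epj eqxx in Hpj.
have Hlt : bottom (col (restr m) p) < a by rewrite ltn_neqAle Hba Hbj.
exfalso; apply: (Tpat (j := p) (r := s.-1) _ Ha Hin).
- by rewrite prednK.
- by rewrite -/cp -Hb.
- by rewrite ltnS.
- by rewrite prednK // -/cp ltn_neqAle eq_sym Hdne.
Qed.

Lemma restr0 : restr 0 = nseq n [::].
Proof.
apply: (@eq_from_nth _ [::]); first by rewrite size_restr size_nseq.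
move=> i _; change (col (restr 0) i = col (nseq n [::]) i).
rewrite colE col_restr filter_nil_all // => y /Tmem.
by case: y.
Qed.

Lemma restrN : restr N = T.
Proof.
rewrite /restr map_id_in // => c Hc; apply/all_filterP/allP => x Hx.
case/(nthP [::]): Hc => j Hj Ej.
have : x \in col T j by rewrite /col Ej.
by move/Tmem => /andP [].
Qed.

Lemma slots_restr m : m <= N -> Posz (slots (restr m)) = (\sum_(x <- take m Dof) x)%R.
Proof.
elim: m => [|m IH] Hm.
  rewrite take0 big_nil restr0 /slots big1 // => j _.
  by rewrite colE.
have Hm' : m < N := Hm.
rewrite (take_nth (0:int)); last by rewrite size_Dof.
rewrite -cats1 big_cat big_seq1 -IH; last exact: ltnW.
have [j Hj [Hin Hc]] := restr_case Hm'.
rewrite (restr_succ Hj Hin).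
case: Hc => [[Hh [Hnil [Hne HD]]]|[Hact [Hh HD]]]; rewrite HD.
  by rewrite slots_upd_nil // PoszD.
have Hrj : col (restr m) j != [::] by move: Hact; rewrite /active; case: (col _ j).
have Hsz : size (col (restr m) j) < (nth 0 k j).+1 by move: Hact => /andP [].
have := slots_upd_cons m.+1 Hj Hrj Hsz.
move=> <- /=; lia.
Qed.

Lemma Dof_dyck : is_dyck k Dof.
Proof.
split.
- exact: size_Dof.
- have Hf : [seq x <- Dof | (0 < x)%R] =
     map (fun x => if topc x < size T then Posz (nth 0 k (topc x)) else (-1)%R)
         [seq x <- iota 1 N | topc x < size T].
    rewrite filter_map; congr map; apply: eq_filter => x /=.
    case: ifP => // H; rewrite ltz_nat; apply: kpos_nth; by rewrite -Tsz.
  have Htops : [seq x <- iota 1 N | topc x < size T] =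
               map (fun j => head 0 (col T j)) (iota 0 n).
    apply: (irr_sorted_eq ltn_trans ltnn).
    - apply: sorted_filter; [exact: ltn_trans | exact: iota_ltn_sorted].
    - apply: sorted_map_iota => i _; rewrite add0n => Hi.
      have := Trow (r := 0) (ltnSn i) Hi.
      rewrite !nth0 (Tlen Hi) (Tlen (ltn_trans (ltnSn i) Hi)); apply => //.
    - move=> x; rewrite mem_filter mem_iota; apply/idP/mapP.
      + move=> /andP [Htx Hx].
        have Hhas : has (fun c : seq nat => head 0 c == x) T by rewrite has_find.
        exists (topc x); first by rewrite mem_iota add0n -Tsz.
        by have := nth_find [::] Hhas => /eqP.
      + move=> [j]; rewrite mem_iota add0n /= => Hj ->.
        rewrite (topc_spec Hj erefl) Tsz Hj /=.
        by have := Tmem (head_mem_T Hj); rewrite add1n ltnS.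
  rewrite Hf Htops -map_comp.
  rewrite -[in RHS](mkseq_nth 0 k) /mkseq -map_comp.
  apply/eq_in_map => j; rewrite mem_iota add0n /= => Hj.
  by rewrite (topc_spec Hj erefl) Tsz Hj.
- apply/allP => y /mapP [x _ ->]; case: ifP => H //.
  by rewrite ltz_nat kpos_nth // -Tsz.
- move=> i Hi; rewrite -slots_restr; last exact: ltnW.
  by [].
Qed.

Lemma fill_surj : fillT k Dof = T.
Proof.
rewrite (fillT_eq Dof_dyck).
have := @fill_fromP k (fun m S => S = restr m) (SW Dof) 0 (nseq n [::]) (esym restr0).
rewrite add0n (size_SW Dof_dyck) restrN; apply.
move=> t S; rewrite add0n => Ht ->.
exact: restr_step.
Qed.

End Surj.
End K.

Unset Implicit Arguments.

Theorem mainTheorem2 (k : seq nat) :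
  0 < size k -> all (fun x => 0 < x) k ->
  [/\ forall D, is_dyck k D -> is_tab k (fillT k D),
      forall D1 D2, is_dyck k D1 -> is_dyck k D2 ->
        fillT k D1 = fillT k D2 -> D1 = D2
    & forall T, is_tab k T -> exists2 D, is_dyck k D & fillT k D = T].
Proof.
move=> kn kpos; split.
- move=> D HD; exact: (tab_of_inv kpos kn HD (inv_fill kpos kn HD)).
- move=> D1 D2 H1 H2; exact: (fill_inj kpos kn H1 H2).
- move=> T HT; exists (Dof k T); [apply: Dof_dyck => //; exact: HT | apply: fill_surj => //; exact: HT].
Qed.
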